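(* For any theory $\Gamma$ and any consistent set $T$ of explicit literals: $\langle T,T\rangle$ is an equilibrium model of $\Gamma$ if and only if $T$ is a $\subseteq$-minimal model of $\Gamma^T_+=\{\varphi^T_+\mid\varphi\in\Gamma\}$, i.e., $T$ classically satisfies every formula of $\Gamma^T_+$ and no consistent set $H\subsetneq T$ does.
   Context: Fix a set $\mathit{At}$ of atoms. An explicit literal is $p$ or $\sim p$; a set of explicit literals is consistent if it never contains both $p$ and $\sim p$. Formulas: $\varphi ::= p\mid\bot\mid\varphi\wedge\varphi\mid\varphi\vee\varphi\mid\varphi\to\varphi\mid\sim\varphi$ with $\neg\varphi:=\varphi\to\bot$, $\top:=\neg\bot$; a theory is a set of formulas. Classical satisfaction/falsification by a consistent set $T$: $T\not\models\bot$, $T=\!\!|\;\bot$; $T\models p$ iff $p\in T$, $T=\!\!|\;p$ iff $\sim p\in T$; $\wedge$: satisfied iff both, falsified iff at least one falsified; $\vee$: satisfied iff at least one, falsified iff both falsified; $T\models\sim\varphi$ iff $T=\!\!|\;\varphi$, $T=\!\!|\;\sim\varphi$ iff $T\models\varphi$; $T\models\varphi\to\psi$ iff $T\not\models\varphi$ or $T\models\psi$, $T=\!\!|\;\varphi\to\psi$ iff $T\models\varphi$ and $T=\!\!|\;\psi$. ${\cal X}_5$-interpretations: pairs $\langle H,T\rangle$ of consistent sets of explicit literals with $H\subseteq T$, with $\langle H,T\rangle\not\models\bot$, $=\!\!|\;\bot$; $\models p$ iff $p\in H$, $=\!\!|\;p$ iff $\sim p\in H$; $\wedge,\vee,\sim$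 as in the classical clauses with $\langle H,T\rangle$ in place of $T$; $\langle H,T\rangle\models\varphi\to\psi$ iff (i) $\langle H,T\rangle\not\models\varphi$ or $\langle H,T\rangle\models\psi$ and (ii) $\langle T,T\rangle\not\models\varphi$ or $\langle T,T\rangle\models\psi$; $\langle H,T\rangle=\!\!|\;\varphi\to\psi$ iff $\langle T,T\rangle\models\varphi$ and $\langle H,T\rangle=\!\!|\;\psi$. $\langle T,T\rangle$ is an equilibrium model of $\Gamma$ if it satisfies every formula of $\Gamma$ and no $\langle H,T\rangle$ with $H\subsetneq T$ does. Transformations $\varphi^T_+$, $\varphi^T_-$ (clauses for $\neg\alpha$ take priority over those for $\to$): $\varphi^T_+=\bot$ if $T\not\models\varphi$; otherwise $p^T_+=p$; $(\alpha\otimes\beta)^T_+=\alpha^T_+\otimes\beta^T_+$ for $\otimes\in\{\wedge,\vee\}$; $(\alpha\to\beta)^T_+=\neg(\alpha^T_+)\vee\beta^T_+$; $(\neg\alpha)^T_+=\neg(\alpha^T_+)$; $(\sim\alpha)^T_+=\sim(\alpha^T_-)$. $\varphi^T_-=\top$ if $T$ does not falsify $\varphi$; otherwise $p^T_-=p$; $\bot^T_-=\bot$; $(\alpha\otimes\beta)^T_-=\alpha^T_-\otimes\beta^T_-$; $(\alpha\to\beta)^T_-=\beta^T_-$; $(\neg\alpha)^T_-=\bot$; $(\sim\alpha)^T_-=\sim(\alpha^T_+)$. *)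

(* Defs.v *)
From Stdlib Require Import Bool.

Section Syntax.
Variable At : Type.

Inductive lit : Type := Pos (p : At) | Neg (p : At).

Inductive form : Type :=
| Atom (p : At)
| Bot
| And (a b : form)
| Or (a b : form)
| Imp (a b : form)
| SNeg (a : form).

Definition Not (a : form) : form := Imp a Bot.
Definition Top : form := Not Bot.

Definition litset := lit -> bool.
Definition theory := form -> Prop.

Definition consistent (T : litset) : Prop :=
  forall p : At, ~ (T (Pos p) = true /\ T (Neg p) = true).

Definition subset (H T : litset) : Prop := forall l, H l = true -> T l = true.
Definition ssubset (H T : litset) : Prop :=
  subset H T /\ exists l, T l = true /\ H l = false.

Fixpoint csat (T : litset) (f : form) : bool :=
  match f with
  | Atom p => T (Pos p)
  | Bot => false
  | And a b => csat T a && csat T b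
  | Or a b => csat T a || csat T b
  | Imp a b => negb (csat T a) || csat T b
  | SNeg a => cfal T a
  end
with cfal (T : litset) (f : form) : bool :=
  match f with
  | Atom p => T (Neg p)
  | Bot => true
  | And a b => cfal T a || cfal T b
  | Or a b => cfal T a && cfal T b
  | Imp a b => csat T a && cfal T b
  | SNeg a => csat T a
  end.

(* X5 satisfaction / falsification by <H,T> *)
Fixpoint xsat (H T : litset) (f : form) : bool :=
  match f with
  | Atom p => H (Pos p)
  | Bot => false
  | And a b => xsat H T a && xsat H T b
  | Or a b => xsat H T a || xsat H T b
  | Imp a b => (negb (xsat H T a) || xsat H T b)
               && (negb (xsat T T a) || xsat T T b)
  | SNeg a => xfal H T a
  end
with xfal (H T : litset) (f : form) : bool :=
  match f with
  | Atom p => H (Neg p)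
  | Bot => true
  | And a b => xfal H T a || xfal H T b
  | Or a b => xfal H T a && xfal H T b
  | Imp a b => xsat T T a && xfal H T b
  | SNeg a => xsat H T a
  end.

Definition xmodel (G : theory) (H T : litset) : Prop :=
  forall f, G f -> xsat H T f = true.

Definition equilibrium (G : theory) (T : litset) : Prop :=
  consistent T /\ xmodel G T T /\
  forall H : litset, consistent H -> ssubset H T -> ~ xmodel G H T.

(* transformations phi^T_+ and phi^T_- ; clauses for (Not a) = Imp a Bot
   take priority over the ones for Imp *)
Fixpoint tplus (T : litset) (f : form) : form :=
  if negb (csat T f) then Bot else
  match f with
  | Atom p => Atom p
  | Bot => Bot
  | And a b => And (tplus T a) (tplus T b)
  | Or a b => Or (tplus T a) (tplus T b)
  | Imp a Bot => Not (tplus T a)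
  | Imp a b => Or (Not (tplus T a)) (tplus T b)
  | SNeg a => SNeg (tminus T a)
  end
with tminus (T : litset) (f : form) : form :=
  if negb (cfal T f) then Top else
  match f with
  | Atom p => Atom p
  | Bot => Bot
  | And a b => And (tminus T a) (tminus T b)
  | Or a b => Or (tminus T a) (tminus T b)
  | Imp a Bot => Bot
  | Imp a b => tminus T b
  | SNeg a => SNeg (tplus T a)
  end.

Definition theory_plus (G : theory) (T : litset) : theory :=
  fun g => exists f, G f /\ g = tplus T f.

Definition cmodel (G : theory) (T : litset) : Prop :=
  forall g, G g -> csat T g = true.

Definition minimal_model (G : theory) (T : litset) : Prop :=
  cmodel G T /\ forall H : litset, consistent H -> ssubset H T -> ~ cmodel G H.

End Syntax.

Arguments Pos {At}. Arguments Neg {At}.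
Arguments Atom {At}. Arguments Bot {At}. Arguments And {At}. Arguments Or {At}.
Arguments Imp {At}. Arguments SNeg {At}.

(* Main.v *)
Require Import Defs.
From Stdlib Require Import Bool.

Ltac bs := repeat match goal with
 | X: _ && _ = true |- _ => apply andb_true_iff in X; destruct X
 | X: _ || _ = true |- _ => apply orb_true_iff in X
 | |- _ && _ = true => apply andb_true_iff; split
 | |- _ || _ = true => apply orb_true_iff
 end.

Section S.
Variable At : Type.
Variable T : litset At.

Lemma sat_TT : forall f : form At, xsat At T T f = csat At T f /\ xfal At T T f = cfal At T f.
Proof.
  induction f; simpl; try tauto;
  try (destruct IHf1 as [A1 B1]; destruct IHf2 as [A2 B2]; rewrite ?A1, ?A2, ?B1, ?B2;
       try rewrite andb_diag; tauto).
  all: try (destruct IHf as [A B]; rewrite A, B; tauto).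
Qed.

Variable H : litset At.
Hypothesis Hs : subset At H T.

Lemma persist : forall f : form At,
  (xsat At H T f = true -> xsat At T T f = true) /\
  (xfal At H T f = true -> xfal At T T f = true).
Proof.
  induction f; simpl.
  - split; intros; apply Hs; auto.
  - split; auto.
  - destruct IHf1, IHf2; split; intros X;
    bs; intuition.
  - destruct IHf1, IHf2; split; intros X;
    bs; intuition.
  - destruct IHf1, IHf2; split; intros X;
    bs; intuition.
  - destruct IHf; split; auto.
Qed.

Lemma sat_false f : csat At T f = false -> xsat At H T f = false.
Proof.
  intro E. destruct (xsat At H T f) eqn:X; auto.
  apply (proj1 (persist f)) in X. rewrite (proj1 (sat_TT f)) in X. congruence.
Qed.

Lemma fal_false f : cfal At T f = false -> xfal At H T f = false.
Proof.
  intro E. destruct (xfal At H T f) eqn:X; auto.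
  apply (proj2 (persist f)) in X. rewrite (proj2 (sat_TT f)) in X. congruence.
Qed.

Lemma tplus_eq f : tplus At T f = if negb (csat At T f) then Bot else
  match f with
  | Atom p => Atom p
  | Bot => Bot
  | And a b => And (tplus At T a) (tplus At T b)
  | Or a b => Or (tplus At T a) (tplus At T b)
  | Imp a Bot => Not At (tplus At T a)
  | Imp a b => Or (Not At (tplus At T a)) (tplus At T b)
  | SNeg a => SNeg (tminus At T a)
  end.
Proof. destruct f; reflexivity. Qed.

Lemma tminus_eq f : tminus At T f = if negb (cfal At T f) then Top At else
  match f with
  | Atom p => Atom p
  | Bot => Bot
  | And a b => And (tminus At T a) (tminus At T b)
  | Or a b => Or (tminus At T a) (tminus At T b)
  | Imp a Bot => Bot
  | Imp a b => tminus At T b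
  | SNeg a => SNeg (tplus At T a)
  end.
Proof. destruct f; reflexivity. Qed.

Lemma key : forall f : form At,
  xsat At H T f = csat At H (tplus At T f) /\ xfal At H T f = cfal At H (tminus At T f).
Proof.
  induction f; split;
  match goal with
  | |- xsat _ _ _ ?X = _ => rewrite (tplus_eq X); destruct (csat At T X) eqn:E;
       [ | change (csat At H Bot) with false; apply sat_false; auto ]
  | |- xfal _ _ _ ?X = _ => rewrite (tminus_eq X); destruct (cfal At T X) eqn:E;
       [ | change (cfal At H (Top At)) with false; apply fal_false; auto ]
  end; simpl negb; cbv iota.
  all: try (destruct IHf1 as [A1 B1]; destruct IHf2 as [A2 B2]).
  all: try (destruct IHf as [A B]).
  all: simpl in E.
  1-8,11,12: simpl; congruence.
  all: simpl xsat; simpl xfal; rewrite ?(proj1 (sat_TT f1)), ?(proj1 (sat_TT f2)).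
  all: destruct f2; simpl in *; rewrite ?A1, ?A2, ?B1, ?B2;
    repeat match goal with |- context [csat At ?h ?x] => 
      match x with tplus _ _ => fail 1 | _ => destruct (csat At h x) end end;
    simpl in *; try congruence;
    repeat match goal with |- context [cfal At ?h ?x] => destruct (cfal At h x) end;
    simpl in *; try congruence.
  all: repeat match goal with |- context [csat At ?h ?x] => destruct (csat At h x) end;
    simpl in *; try congruence.
Qed.

Lemma model_equiv (G : theory At) :
  xmodel At G H T <-> cmodel At (theory_plus At G T) H.
Proof.
  split.
  - intros M g [f [Gf ->]]. rewrite <- (proj1 (key f)). apply M; auto.
  - intros M f Gf. rewrite (proj1 (key f)). apply M. exists f; auto.
Qed.
End S.

Lemma subset_refl (At : Type) (T : litset At) : subset At T T.
Proof. intros l h; exact h. Qed.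

Theorem corollary3 (At : Type) (G : theory At) (T : litset At) :
  consistent At T ->
  (equilibrium At G T <-> minimal_model At (theory_plus At G T) T).
Proof.
  intros CT. split.
  - intros [_ [M Min]]. split.
    + apply (model_equiv At T T (subset_refl At T)); auto.
    + intros H CH SS CM. apply (Min H CH SS).
      apply (model_equiv At T H (proj1 SS)); auto.
  - intros [M Min]. split; [auto | split].
    + apply (model_equiv At T T (subset_refl At T)); auto.
    + intros H CH SS XM. apply (Min H CH SS).
      apply (model_equiv At T H (proj1 SS)); auto.
Qed.
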